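(* Let $\mathcal{H}$ be a finite-dimensional Hilbert space, let $\mathcal{E}:\mathcal{L}(\mathcal{H})\to\mathcal{L}(\mathcal{H})$ be a quantum channel, and let $\mathcal{C}\subseteq\mathcal{H}$ be a subspace with orthogonal projection $P_{\mathcal{C}}$. Then $\mathcal{C}$ is correctable for $\mathcal{E}$ if and only if there exist probabilities $p_i\ge 0$ with $\sum_i p_i=1$ and unitary operators $U_i$ on $\mathcal{H}$ such that the mixed unitary channel $\mathcal{F}(\rho)=\sum_i p_i U_i\rho U_i^\dagger$ satisfies $\mathcal{E}(\rho)=\mathcal{F}(\rho)$ for all $\rho\in\mathcal{L}(\mathcal{C})$, and $P_{\mathcal{C}}U_i^\dagger U_j P_{\mathcal{C}}=0$ for all $i\neq j$.
   Context: A quantum channel (quantum operation) on $\mathcal{L}(\mathcal{H})$ is a completely positive trace-preserving linear map; it has a Kraus representation $\mathcal{E}(\rho)=\sum_i E_i\rho E_i^\dagger$ with $\sum_i E_i^\dagger E_i=I$, written $\mathcal{E}\equiv\{E_i\}$. $\mathcal{L}(\mathcal{C})$ is identified with the operators $\rho$ on $\mathcal{H}$ with $\rho=P_{\mathcal{C}}\rho P_{\mathcal{C}}$. Write $\mathcal{P}_{\mathcal{C}}(\rho)=P_{\mathcal{C}}\rho P_{\mathcal{C}}$. A subspace $\mathcal{C}$ is correctable for $\mathcal{E}$ if there is a quantum channel $\mathcal{R}$ on $\mathcal{L}(\mathcal{H})$ with $\mathcal{R}\circ\mathcal{E}\circ\mathcal{P}_{\mathcal{C}}=\mathcal{P}_{\mathcal{C}}$.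 *)

(* Defs.v *)
(* Scalars: an arbitrary numClosedFieldType C (e.g. algC);
   the Hilbert space H is C^n, operators on H are 'M[C]_n. *)
From HB Require Import structures.
From mathcomp Require Import all_boot all_order all_algebra.
From mathcomp Require Import sesquilinear spectral.
Set Implicit Arguments. Unset Strict Implicit. Unset Printing Implicit Defensive.
Import Order.TTheory GRing.Theory Num.Theory.
Local Open Scope ring_scope.

Definition adjmx (C : numClosedFieldType) (n : nat) (A : 'M[C]_n) : 'M[C]_n :=
  (map_mx Num.conj A)^T.

Definition kraus_family (C : numClosedFieldType) (n m : nat)
  (E : 'I_m -> 'M[C]_n) : Prop :=
  \sum_(i < m) adjmx (E i) *m E i = 1%:M.

Definition kraus_apply (C : numClosedFieldType) (n m : nat)
  (E : 'I_m -> 'M[C]_n) (rho : 'M[C]_n) : 'M[C]_n :=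
  \sum_(i < m) E i *m rho *m adjmx (E i).

Definition orth_proj (C : numClosedFieldType) (n : nat) (P : 'M[C]_n) : Prop :=
  adjmx P = P /\ P *m P = P.

Definition proj_map (C : numClosedFieldType) (n : nat) (P rho : 'M[C]_n) : 'M[C]_n :=
  P *m rho *m P.

Definition in_LC (C : numClosedFieldType) (n : nat) (P rho : 'M[C]_n) : Prop :=
  rho = P *m rho *m P.

Definition correctable (C : numClosedFieldType) (n m : nat)
  (E : 'I_m -> 'M[C]_n) (P : 'M[C]_n) : Prop :=
  exists (k : nat) (R : 'I_k -> 'M[C]_n), kraus_family R /\
    forall rho : 'M[C]_n,
      kraus_apply R (kraus_apply E (proj_map P rho)) = proj_map P rho.

Definition mixed_unitary_apply (C : numClosedFieldType) (n k : nat)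
  (p : 'I_k -> C) (U : 'I_k -> 'M[C]_n) (rho : 'M[C]_n) : 'M[C]_n :=
  \sum_(i < k) p i *: (U i *m rho *m adjmx (U i)).

(* Main.v *)
Require Import Defs.
From HB Require Import structures.
From mathcomp Require Import all_boot all_order all_algebra.
From mathcomp Require Import sesquilinear spectral.
Import Order.TTheory GRing.Theory Num.Theory.
Set Implicit Arguments. Unset Strict Implicit. Unset Printing Implicit Defensive.
Local Open Scope ring_scope.



Section Adj.
Variable C : numClosedFieldType.
Import Num.Def.

Definition ad m n (A : 'M[C]_(m, n)) : 'M[C]_(n, m) := (map_mx conjC A)^T.

Lemma adjmxE n (A : 'M[C]_n) : adjmx A = ad A. Proof. by []. Qed.

Lemma adE m n (A : 'M[C]_(m, n)) : (A ^t* )%sesqui = ad A.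
Proof. by rewrite /ad map_trmx. Qed.

Lemma ad_entry m n (A : 'M[C]_(m, n)) i j : ad A i j = (A j i)^*.
Proof. by rewrite !mxE. Qed.

Lemma adM m n p (A : 'M[C]_(m, n)) (B : 'M[C]_(n, p)) : ad (A *m B) = ad B *m ad A.
Proof. by rewrite /ad map_mxM trmx_mul. Qed.

Lemma adK m n (A : 'M[C]_(m, n)) : ad (ad A) = A.
Proof. by apply/matrixP => i j; rewrite !mxE conjCK. Qed.

Lemma adD m n (A B : 'M[C]_(m, n)) : ad (A + B) = ad A + ad B.
Proof. by apply/matrixP => i j; rewrite !mxE rmorphD. Qed.

Lemma adN m n (A : 'M[C]_(m, n)) : ad (- A) = - ad A.
Proof. by apply/matrixP => i j; rewrite !mxE rmorphN. Qed.

Lemma adB m n (A B : 'M[C]_(m, n)) : ad (A - B) = ad A - ad B.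
Proof. by rewrite adD adN. Qed.

Lemma adZ m n a (A : 'M[C]_(m, n)) : ad (a *: A) = a^* *: ad A.
Proof. by apply/matrixP => i j; rewrite !mxE rmorphM. Qed.

Lemma ad0 m n : ad (0 : 'M[C]_(m, n)) = 0.
Proof. by apply/matrixP => i j; rewrite !mxE rmorph0. Qed.

Lemma ad1 n : ad (1%:M : 'M[C]_n) = 1%:M.
Proof. by apply/matrixP => i j; rewrite !mxE rmorph_nat eq_sym. Qed.

Lemma ad_sum m n I (r : seq I) (Pr : pred I) (F : I -> 'M[C]_(m, n)) :
  ad (\sum_(i <- r | Pr i) F i) = \sum_(i <- r | Pr i) ad (F i).
Proof.
elim/big_rec2: _ => [|i y1 y2 _ <-]; first by rewrite ad0.
by rewrite adD.
Qed.

Lemma unitary_ad n (U : 'M[C]_n) : U \is unitarymx -> U *m ad U = 1%:M /\ ad U *m U = 1%:M.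
Proof.
move=> hU; have h1 : U *m ad U = 1%:M by rewrite -adE; apply/unitarymxP.
by split => //; apply: mulmx1C.
Qed.

Lemma unitaryP n (U : 'M[C]_n) : ad U *m U = 1%:M -> U \is unitarymx.
Proof. by move=> h; apply/unitarymxP; rewrite adE; apply: mulmx1C. Qed.

Lemma tr_adM m n (A : 'M[C]_(m, n)) :
  \tr (ad A *m A) = \sum_i \sum_j A j i * (A j i)^*.
Proof.
rewrite /mxtrace; apply: eq_bigr => i _; rewrite mxE.
by apply: eq_bigr => j _; rewrite !mxE mulrC.
Qed.

Lemma tr_adM_ge0 m n (A : 'M[C]_(m, n)) : 0 <= \tr (ad A *m A).
Proof. by rewrite tr_adM; apply: sumr_ge0 => i _; apply: sumr_ge0 => j _; apply: mul_conjC_ge0. Qed.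

Lemma tr_adM_eq0 m n (A : 'M[C]_(m, n)) : \tr (ad A *m A) = 0 -> A = 0.
Proof.
rewrite tr_adM => /eqP; rewrite psumr_eq0; last first.
  by move=> i _; apply: sumr_ge0 => j _; apply: mul_conjC_ge0.
move=> /allP h; apply/matrixP => j i; rewrite mxE.
have := h i (mem_index_enum _) => /=; rewrite psumr_eq0; last first.
  by move=> k _; apply: mul_conjC_ge0.
by move=> /allP /(_ j (mem_index_enum _)) /=; rewrite mul_conjC_eq0 => /eqP.
Qed.

Lemma adM_eq0 m n (A : 'M[C]_(m, n)) : ad A *m A = 0 -> A = 0.
Proof. by move=> h; apply: tr_adM_eq0; rewrite h mxtrace0. Qed.

End Adj.
Import Num.Def.



Lemma rank1 (C : numClosedFieldType) (I J : finType) (x : I -> J -> C) (y : J -> C) :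
  (forall a b, \sum_l x l a * (x l b)^* = y a * (y b)^*) ->
  exists lam : I -> C, forall l a, x l a = lam l * y a.
Proof.
move=> h.
have sum0 (z : I -> C) : \sum_l z l * (z l)^* = 0 -> forall l, z l = 0.
  move=> /eqP; rewrite psumr_eq0; last by move=> l _; apply: mul_conjC_ge0.
  by move=> /allP hz l; have := hz l (mem_index_enum _); rewrite /= mul_conjC_eq0 => /eqP.
case: (boolP [forall a, y a == 0]) => [/forallP y0 | ].
  exists (fun _ => 0) => l a; rewrite mul0r.
  apply: (sum0 (fun l => x l a)) l.
  by rewrite h (eqP (y0 a)) mul0r.
rewrite negb_forall => /existsP [a0 ya0].
have cya0 : (y a0)^* != 0 by rewrite conjC_eq0.
pose lam := fun l => x l a0 / y a0.
exists lam => l a.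
apply/eqP; rewrite -subr_eq0; apply/eqP; move: l.
apply: (sum0 (fun l => x l a - x l a0 / y a0 * y a)).
have e1 : \sum_l x l a * (lam l)^* = y a.
  rewrite /lam; under eq_bigr do rewrite rmorphM /= mulrA.
  by rewrite -mulr_suml h -mulrA fmorphV mulfV // mulr1.
have e3 : \sum_l lam l * (lam l)^* = 1.
  rewrite /lam; under eq_bigr do rewrite rmorphM /= fmorphV mulrACA.
  by rewrite -mulr_suml h mulrACA mulfV // mul1r; apply: mulfV.
have e2 : \sum_l lam l * (x l a)^* = (y a)^*.
  by rewrite -(conjCK (\sum_l _)) rmorph_sum /=; under eq_bigr do rewrite rmorphM /= conjCK mulrC; rewrite e1.
have ex l : (x l a - lam l * y a) * (x l a - lam l * y a)^* =
   x l a * (x l a)^* - (x l a * (lam l)^*) * (y a)^* - (lam l * (x l a)^*) * y a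
   + (lam l * (lam l)^*) * (y a * (y a)^*).
  rewrite rmorphB rmorphM /= mulrBl !mulrBr opprB.
  have -> : lam l * y a * ((lam l)^* * (y a)^*) = lam l * (lam l)^* * (y a * (y a)^*).
    by rewrite mulrACA.
  have -> : lam l * y a * (x l a)^* = lam l * (x l a)^* * y a by rewrite mulrAC.
  have -> : x l a * ((lam l)^* * (y a)^*) = x l a * (lam l)^* * (y a)^* by rewrite mulrA.
  by rewrite -!addrA; congr (_ + (_ + _)); rewrite addrC.
under eq_bigr do rewrite ex.
rewrite !big_split /= !sumrN -!mulr_suml e1 e2 e3 h mul1r.
by rewrite (mulrC (y a)^*) subrr sub0r addNr.
Qed.



Lemma proj_decomp (C : numClosedFieldType) n (P : 'M[C]_n) :
  ad P = P -> P *m P = P ->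
  exists r (X : 'M[C]_(r, n)), X *m ad X = 1%:M /\ P = ad X *m X.
Proof.
move=> hPa hPP.
pose X := schmidt (row_base P).
exists (\rank P), X.
have hXu : X *m ad X = 1%:M.
  by rewrite -adE; apply/unitarymxP; apply: schmidt_unitarymx; apply: rank_leq_col.
split => //.
have eX : (X :=: P)%MS.
  apply: eqmx_trans (eq_row_base P).
  by apply: eqmx_schmidt_free; apply: row_base_free.
have XP : (X <= P)%MS by rewrite eX.
have PX : (P <= X)%MS by rewrite eX.
have hXP : X *m P = X.
  by rewrite -{1}(mulmxKpV XP) -[_ *m P *m P]mulmxA hPP mulmxKpV.
have hPXa : P *m ad X = ad X by have := congr1 (@ad _ _ _) hXP; rewrite adM hPa.
transitivity (P *m (ad X *m X)); last by rewrite mulmxA hPXa.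
rewrite -{2}(mulmxKpV PX) -[RHS]mulmxA (mulmxA X) hXu mul1mx.
by rewrite mulmxKpV.
Qed.

Lemma extend (C : numClosedFieldType) n (P V : 'M[C]_n) :
  ad P = P -> P *m P = P -> ad V *m V = P ->
  exists U, U \is unitarymx /\ U *m P = V.
Proof.
move=> hPa hPP hV.
have hVP : V *m P = V.
  apply/eqP; rewrite -subr_eq0; apply/eqP; apply: adM_eq0.
  rewrite adB adM hPa mulmxBl !mulmxBr !mulmxA hV.
  have -> : P *m ad V *m V = P by rewrite -mulmxA hV hPP.
  by rewrite hPP !subrr.
have hPVa : P *m ad V = ad V by rewrite -{1}hPa -adM hVP.
have e1P : ad (1%:M - P) = 1%:M - P by rewrite adB ad1 hPa.
have e2P : (1%:M - P) *m (1%:M - P) = 1%:M - P.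
  by rewrite mulmxBl !mulmxBr mul1mx mulmx1 mul1mx hPP subrr subr0.
set Q := V *m ad V.
have e1Q : ad (1%:M - Q) = 1%:M - Q by rewrite adB ad1 /Q adM adK.
have e2Q : (1%:M - Q) *m (1%:M - Q) = 1%:M - Q.
  rewrite mulmxBl !mulmxBr mul1mx mulmx1 mul1mx.
  have -> : Q *m Q = Q by rewrite /Q mulmxA -(mulmxA V) hV hVP.
  by rewrite subrr subr0.
have [r [X [hX eX]]] := proj_decomp e1P e2P.
have [r' [Y [hY eY]]] := proj_decomp e1Q e2Q.
have trr : r = r'.
  apply/eqP; rewrite -(eqr_nat C); apply/eqP.
  have t1 : \tr (1%:M - P) = r%:R by rewrite eX mxtrace_mulC hX mxtrace1.
  have t2 : \tr (1%:M - Q) = r'%:R by rewrite eY mxtrace_mulC hY mxtrace1.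
  by rewrite -t1 -t2 !linearB /= /Q mxtrace_mulC hV.
subst r'.
have XP : X *m P = 0.
  have XX : X *m (ad X *m X) = X by rewrite mulmxA hX mul1mx.
  by rewrite -XX -eX -mulmxA mulmxBl mul1mx hPP subrr mulmx0.
have YV : Y *m V = 0.
  have YY : Y *m (ad Y *m Y) = Y by rewrite mulmxA hY mul1mx.
  have YQ : Y *m Q = 0.
    by rewrite -YY -eY -mulmxA mulmxBl mul1mx /Q mulmxA -(mulmxA V) hV hVP subrr mulmx0.
  by rewrite -hVP -hV !mulmxA -(mulmxA Y V) -/Q YQ !mul0mx.
have hXa : ad X *m X = 1%:M - P by [].
exists (V + ad Y *m X); split; last first.
  by rewrite mulmxDl hVP -mulmxA XP mulmx0 addr0.
apply: unitaryP.
rewrite adD adM adK mulmxDl !mulmxDr.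
have -> : ad V *m (ad Y *m X) = 0 by rewrite mulmxA -adM YV ad0 mul0mx.
have -> : ad X *m Y *m V = 0 by rewrite -mulmxA YV mulmx0.
rewrite addr0 add0r hV -mulmxA (mulmxA Y) hY mul1mx -eX.
by rewrite addrC subrK.
Qed.



Lemma sum_delta (C : numClosedFieldType) n k (i : 'I_k) (F : 'I_k -> 'M[C]_n) :
  \sum_j (i == j)%:R *: F j = F i.
Proof.
rewrite (bigD1 i) //= eqxx scale1r big1 ?addr0 // => j hj.
by rewrite eq_sym (negbTE hj) scale0r.
Qed.

Lemma rev_dir (C : numClosedFieldType) (n m : nat)
  (E : 'I_m -> 'M[C]_n) (P : 'M[C]_n) (hP : orth_proj P) k (p : 'I_k -> C) (U : 'I_k -> 'M[C]_n) :
  \sum_(i < k) p i = 1 ->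
  (forall i, U i \is unitarymx) ->
  (forall rho : 'M[C]_n, in_LC P rho -> kraus_apply E rho = mixed_unitary_apply p U rho) ->
  (forall i j : 'I_k, i != j -> P *m adjmx (U i) *m U j *m P = 0) ->
  correctable E P.
Proof.
case: hP => hPa hPP; rewrite adjmxE in hPa.
move=> hp1 hU hEF horth.
have key i j : P *m ad (U i) *m U j *m P = (i == j)%:R *: P.
  case: (eqVneq i j) => [<-|hij]; last by rewrite scale0r horth.
  by have [_ h] := unitary_ad (hU i); rewrite scale1r -(mulmxA P) h mulmx1 hPP.
pose Qs := \sum_i U i *m P *m ad (U i).
have QsU l : Qs *m U l *m P = U l *m P.
  rewrite /Qs mulmx_suml mulmx_suml.
  under eq_bigr do rewrite -!mulmxA (mulmxA P) (mulmxA _ (U l)) key -scalemxAr.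
  by rewrite (eq_bigr (fun i => (l == i)%:R *: (U i *m P))) ?sum_delta // => i _; rewrite eq_sym.
have Qsa : ad Qs = Qs.
  by rewrite /Qs ad_sum; apply: eq_bigr => i _; rewrite !adM adK hPa mulmxA.
have QsQs : Qs *m Qs = Qs.
  rewrite {2}/Qs mulmx_sumr; apply: eq_bigr => i _.
  by rewrite !mulmxA QsU.
pose R (i : 'I_k.+1) := if unlift ord_max i is Some j then P *m ad (U j) else 1%:M - Qs.
have hw (i : 'I_k) : unlift ord_max (widen_ord (leqnSn k) i) = Some i.
  have -> : widen_ord (leqnSn k) i = lift ord_max i.
    by apply: val_inj; rewrite /= /bump leqNgt ltn_ord.
  by rewrite liftK.
have hm : unlift (@ord_max k) ord_max = None by rewrite unlift_none.
exists k.+1, R; split.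
  rewrite /kraus_family big_ord_recr /= /R hm.
  under eq_bigr do rewrite hw.
  rewrite adjmxE adB ad1 Qsa mulmxBl !mulmxBr mul1mx mulmx1 mul1mx QsQs subrr subr0.
  rewrite (eq_bigr (fun i => U i *m P *m ad (U i))) => [|i _]; first by rewrite addrC subrK.
  by rewrite adjmxE adM adK hPa -!mulmxA (mulmxA P) hPP.
move=> rho.
have hr : in_LC P (proj_map P rho).
  by rewrite /in_LC /proj_map !mulmxA hPP -(mulmxA _ P P) hPP.
rewrite hEF // /mixed_unitary_apply /kraus_apply big_ord_recr /= /R hm.
under eq_bigr do rewrite hw.
rewrite /proj_map.
have T i l : P *m ad (U i) *m (U l *m (P *m rho *m P) *m adjmx (U l)) *m adjmx (P *m ad (U i))
   = (i == l)%:R *: (P *m rho *m P).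
  rewrite !adjmxE adM adK hPa.
  transitivity ((P *m ad (U i) *m U l *m P) *m rho *m (P *m ad (U l) *m U i *m P)).
    by rewrite !mulmxA.
  rewrite key key (eq_sym l i); case: (i == l).
    by rewrite !scale1r.
  by rewrite !scale0r mul0mx mulmx0.
have Z l : (1%:M - Qs) *m (U l *m (P *m rho *m P) *m adjmx (U l)) = 0.
  rewrite !mulmxA mulmxBl mul1mx.
  rewrite mulmxBl QsU.
  by rewrite subrr !mul0mx.
have Z' : (1%:M - Qs) *m (\sum_(i < k) p i *: (U i *m (P *m rho *m P) *m adjmx (U i))) = 0.
  by rewrite mulmx_sumr big1 // => l _; rewrite -scalemxAr Z scaler0.
rewrite Z' mul0mx addr0.
under eq_bigr => i _.
  rewrite mulmx_sumr mulmx_suml.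
  under eq_bigr do rewrite -scalemxAr -scalemxAl T scalerA mulrC -scalerA.
  rewrite sum_delta.
  over.
by rewrite -scaler_suml hp1 scale1r.
Qed.



Lemma delta_entry (C : numClosedFieldType) n (X Y : 'M[C]_n) a b c d :
  (X *m delta_mx b d *m ad Y) a c = X a b * (Y c d)^*.
Proof.
have h1 t : (X *m delta_mx b d) a t = X a b * (t == d)%:R.
  rewrite mxE (bigD1 b) //= big1 ?addr0 => [|u hu]; rewrite mxE.
    by rewrite eqxx.
  by rewrite (negbTE hu) mulr0.
rewrite mxE (bigD1 d) //= big1 ?addr0 => [|t ht].
  by rewrite h1 eqxx mulr1 !mxE.
by rewrite h1 (negbTE ht) mulr0 mul0r.
Qed.

Lemma kl_cond (C : numClosedFieldType) n m (E : 'I_m -> 'M[C]_n) (P : 'M[C]_n) :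
  ad P = P -> P *m P = P -> correctable E P ->
  exists alpha : 'M[C]_m, ad alpha = alpha /\
    forall i j, P *m ad (E i) *m E j *m P = alpha i j *: P.
Proof.
move=> hPa hPP [kR [R [hR hrec]]].
pose A k i := R k *m E i *m P.
have hA rho : \sum_k \sum_i A k i *m rho *m ad (A k i) = P *m rho *m P.
  rewrite -[RHS]hrec /kraus_apply /proj_map; apply: eq_bigr => k _.
  rewrite mulmx_sumr mulmx_suml; apply: eq_bigr => i _.
  by rewrite /A !adM hPa !adjmxE !mulmxA.
have h1 : forall (a b : 'I_n * 'I_n),
  \sum_(l : 'I_kR * 'I_m) A l.1 l.2 a.1 a.2 * (A l.1 l.2 b.1 b.2)^* = P a.1 a.2 * (P b.1 b.2)^*.
  move=> [a1 a2] [b1 b2] /=.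
  have := congr1 (fun M : 'M[C]_n => M a1 b1) (hA (delta_mx a2 b2)) => /=.
  rewrite summxE -[X in P *m delta_mx a2 b2 *m X]hPa delta_entry => <-.
  rewrite -(pair_big xpredT xpredT (fun k i => A k i a1 a2 * (A k i b1 b2)^*)) /=.
  by apply: eq_bigr => k _; rewrite summxE; apply: eq_bigr => i _; rewrite delta_entry.
have [lam hlam] := rank1 (x := fun l a => A l.1 l.2 a.1 a.2) (y := fun a => P a.1 a.2) h1.
have hAl k i : A k i = lam (k, i) *: P.
  by apply/matrixP => a b; rewrite [RHS]mxE; exact: (hlam (k, i) (a, b)).
pose alpha := \matrix_(i, j) \sum_k (lam (k, i))^* * lam (k, j).
exists alpha; split.
  apply/matrixP => i j; rewrite !mxE rmorph_sum; apply: eq_bigr => k _.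
  by rewrite rmorphM /= conjCK mulrC.
move=> i j.
have -> : P *m ad (E i) *m E j *m P = P *m ad (E i) *m (\sum_k adjmx (R k) *m R k) *m E j *m P.
  by rewrite hR mulmx1.
rewrite mulmx_sumr !mulmx_suml mxE scaler_suml; apply: eq_bigr => k _.
transitivity (ad (A k i) *m A k j).
  by rewrite /A !adM hPa !mulmxA.
by rewrite !hAl adZ -scalemxAl -scalemxAr hPa scalerA hPP.
Qed.



Lemma mix_kraus (C : numClosedFieldType) n m (E : 'I_m -> 'M[C]_n) (M : 'M[C]_m) X :
  ad M *m M = 1%:M ->
  \sum_s (\sum_i (M s i)^* *: E i) *m X *m ad (\sum_i (M s i)^* *: E i) =
  \sum_i E i *m X *m ad (E i).
Proof.
move=> hM.
transitivity (\sum_s \sum_i \sum_j ((M s i)^* * M s j) *: (E i *m X *m ad (E j))).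
  apply: eq_bigr => s _.
  rewrite ad_sum mulmx_suml mulmx_suml; apply: eq_bigr => i _.
  rewrite mulmx_sumr; apply: eq_bigr => j _.
  by rewrite adZ conjCK -scalemxAl -scalemxAr -scalemxAl scalerA mulrC.
rewrite exchange_big; apply: eq_bigr => i _.
rewrite exchange_big /=.
under eq_bigr do rewrite -scaler_suml.
have e j : \sum_s (M s i)^* * M s j = (i == j)%:R.
  have := congr1 (fun A : 'M[C]_m => A i j) hM => /=; rewrite !mxE => <-.
  transitivity ((ad M *m M) i j); first by rewrite mxE; apply: eq_bigr => s _; rewrite !mxE.
  by rewrite mxE.
by rewrite (eq_bigr (fun j => (i == j)%:R *: (E i *m X *m ad (E j)))) ?sum_delta // => j _; rewrite e.
Qed.

Lemma expand2 (C : numClosedFieldType) n m (A B : 'M[C]_n) (a b : 'I_m -> 'M[C]_n) :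
  A *m (\sum_i a i) *m (\sum_j b j) *m B = \sum_i \sum_j A *m a i *m b j *m B.
Proof.
rewrite [A *m _]mulmx_sumr mulmx_suml mulmx_suml; apply: eq_bigr => i _.
by rewrite mulmx_sumr mulmx_suml.
Qed.

Lemma fwd2 (C : numClosedFieldType) n m (E : 'I_m -> 'M[C]_n) (P : 'M[C]_n)
  (hE : kraus_family E) (hPa : ad P = P) (hPP : P *m P = P) (hP0 : P != 0)
  (alpha : 'M[C]_m) (ha : ad alpha = alpha)
  (hkl : forall i j, P *m ad (E i) *m E j *m P = alpha i j *: P) :
  exists (k : nat) (p : 'I_k -> C) (U : 'I_k -> 'M[C]_n),
    [/\ (forall i, 0 <= p i),
        \sum_(i < k) p i = 1,
        (forall i, U i \is unitarymx),
        (forall rho : 'M[C]_n, in_LC P rho ->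
           kraus_apply E rho = mixed_unitary_apply p U rho) &
        (forall i j : 'I_k, i != j -> P *m adjmx (U i) *m U j *m P = 0)].
Proof.
have hnorm : alpha \is normalmx by apply/normalmxP; rewrite adE ha.
set M := spectralmx alpha.
set d := spectral_diag alpha.
have hMu : M \is unitarymx := spectral_unitarymx alpha.
have [MadM adMM] := unitary_ad hMu.
have hsp : alpha = ad M *m diag_mx d *m M.
  by move/orthomx_spectralP: hnorm; rewrite invmx_unitary // adE.
have hD : M *m alpha *m ad M = diag_mx d.
  by rewrite hsp !mulmxA MadM mul1mx -mulmxA MadM mulmx1.
pose F s := \sum_i (M s i)^* *: E i.
have adF s : ad (F s) = \sum_i M s i *: ad (E i).
  by rewrite ad_sum; apply: eq_bigr => i _; rewrite adZ conjCK.
have klF s t : P *m ad (F s) *m F t *m P = diag_mx d s t *: P.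
  transitivity (\sum_i \sum_j ((M s i * (M t j)^*) * alpha i j) *: P).
    rewrite adF /F expand2; apply: eq_bigr => i _; apply: eq_bigr => j _.
    by rewrite -!scalemxAr -!scalemxAl hkl !scalerA (mulrC (M s i)).
  under eq_bigr do rewrite -scaler_suml.
  rewrite -scaler_suml -hD; congr (_ *: _).
  rewrite !mxE exchange_big; apply: eq_bigr => j _.
  rewrite !mxE mulr_suml; apply: eq_bigr => i _.
  by rewrite mulrAC.
have trP : 0 < \tr P.
  rewrite -{1}hPP -{1}hPa lt_def tr_adM_ge0 andbT.
  by apply/eqP => /tr_adM_eq0 /eqP; apply/negP.
have dge0 s : 0 <= d 0 s.
  have := klF s s; rewrite mxE eqxx mulr1n => e.
  have := congr1 mxtrace e; rewrite linearZ /= => e2.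
  rewrite -(pmulr_lge0 _ trP) -e2 -{1}hPa -adM -mulmxA.
  exact: tr_adM_ge0.
have sumd : \sum_s d 0 s = 1.
  have e1 : \sum_s d 0 s = \sum_i alpha i i.
    rewrite -mxtrace_diag -hD -mulmxA mxtrace_mulC -mulmxA adMM mulmx1.
    by [].
  have e2 : (\sum_i alpha i i) *: P = P.
    rewrite scaler_suml.
    transitivity (P *m (\sum_i adjmx (E i) *m E i) *m P).
      rewrite mulmx_sumr mulmx_suml; apply: eq_bigr => i _.
      by rewrite -hkl !mulmxA.
    by rewrite hE mulmx1 hPP.
  rewrite e1; apply/eqP; rewrite -subr_eq0; apply/eqP.
  have : ((\sum_i alpha i i) - 1) *: P = 0 by rewrite scalerBl e2 scale1r subrr.
  by move/eqP; rewrite scaler_eq0 (negbTE hP0) orbF => /eqP.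
pose c s := (sqrtC (d 0 s))^-1.
have cR s : (c s)^* = c s.
  by apply: conj_Creal; apply: ger0_real; rewrite invr_ge0 sqrtC_ge0.
have sqR s : (sqrtC (d 0 s))^* = sqrtC (d 0 s).
  by apply: conj_Creal; apply: ger0_real; rewrite sqrtC_ge0.
have sq2 s : sqrtC (d 0 s) * sqrtC (d 0 s) = d 0 s by rewrite -expr2 sqrtCK.
pose V s := c s *: (F s *m P).
have adVV s : d 0 s != 0 -> ad (V s) *m V s = P.
  move=> h.
  rewrite /V adZ -scalemxAl -scalemxAr scalerA cR adM hPa !mulmxA klF mxE eqxx mulr1n scalerA.
  by rewrite /c -invfM sq2 mulVf // scale1r.
have hU : forall s, exists U, U \is unitarymx /\ (d 0 s != 0 -> U *m P = V s).
  move=> s; case: (eqVneq (d 0 s) 0) => h.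
    by exists 1%:M; split => //; apply: unitaryP; rewrite ad1 mul1mx.
  have [U [hU1 hU2]] := extend hPa hPP (adVV s h).
  by exists U; split.
have [Uf hUf] := fin_all_exists hU.
have keyS s rho : rho = P *m rho *m P ->
    F s *m rho *m ad (F s) = d 0 s *: (Uf s *m rho *m ad (Uf s)).
  move=> hr; have [hu1 hu2] := hUf s.
  have -> : F s *m rho *m ad (F s) = (F s *m P) *m rho *m ad (F s *m P).
    by rewrite {1}hr adM hPa !mulmxA.
  case: (eqVneq (d 0 s) 0) => h.
    have FP0 : F s *m P = 0.
      apply: adM_eq0; rewrite adM hPa !mulmxA klF mxE eqxx mulr1n h scale0r.
      by [].
    by rewrite FP0 !mul0mx h scale0r.
  have FP : F s *m P = sqrtC (d 0 s) *: (Uf s *m P).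
    by rewrite hu2 // /V scalerA /c mulfV ?scale1r // sqrtC_eq0.
  rewrite FP adZ sqR -scalemxAl -scalemxAr -scalemxAl scalerA sq2 adM hPa.
  by congr (_ *: _); rewrite {2}hr !mulmxA.
have hmix X : kraus_apply E X = \sum_s F s *m X *m ad (F s).
  by symmetry; exact: (mix_kraus E X adMM).
pose S := [pred s | d 0 s != 0].
have dS (G : 'I_m -> 'M[C]_n) : \sum_s d 0 s *: G s = \sum_(j < #|S|) d 0 (enum_val j) *: G (enum_val j).
  rewrite -(big_enum_val (fun s => d 0 s *: G s)) /= [RHS]big_mkcond /=.
  apply: eq_bigr => s _; rewrite inE /=.
  by case: eqVneq => [->|]; rewrite ?scale0r.
exists #|S|, (fun j => d 0 (enum_val j)), (fun j => Uf (enum_val j)); split.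
- by move=> j; apply: dge0.
- rewrite -(big_enum_val (fun s => d 0 s)) /= -sumd big_mkcond /=.
  apply: eq_bigr => s _; rewrite inE /=.
  by case: eqVneq => [->|].
- by move=> j; have [] := hUf (enum_val j).
- move=> rho hr.
  rewrite hmix /mixed_unitary_apply /= -(dS (fun s => Uf s *m rho *m adjmx (Uf s))); apply: eq_bigr => s _.
  exact: keyS.
- move=> j j' hne.
  have hst : enum_val j != enum_val j' :> 'I_m.
    by apply: contra hne => /eqP /enum_val_inj ->.
  have hs : enum_val j \in S := enum_valP j.
  have ht : enum_val j' \in S := enum_valP j'.
  have [_ h1] := hUf (enum_val j).
  have [_ h2] := hUf (enum_val j').
  have -> : P *m adjmx (Uf (enum_val j)) = ad (Uf (enum_val j) *m P) by rewrite adM hPa.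
  rewrite -mulmxA h1 // h2 // /V.
  rewrite adZ -scalemxAl -scalemxAr adM hPa !mulmxA klF mxE (negbTE hst) mulr0n.
  by rewrite scale0r !scaler0.
Qed.


Unset Implicit Arguments.
Theorem lemma1 (C : numClosedFieldType) (n m : nat)
  (E : 'I_m -> 'M[C]_n) (P : 'M[C]_n)
  (hE : kraus_family E) (hP : orth_proj P) :
  correctable E P <->
  exists (k : nat) (p : 'I_k -> C) (U : 'I_k -> 'M[C]_n),
    [/\ (forall i, 0 <= p i),
        \sum_(i < k) p i = 1,
        (forall i, U i \is unitarymx),
        (forall rho : 'M[C]_n, in_LC P rho ->
           kraus_apply E rho = mixed_unitary_apply p U rho) &
        (forall i j : 'I_k, i != j -> P *m adjmx (U i) *m U j *m P = 0)].
Proof.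
have [hPa hPP] := hP.
rewrite adjmxE in hPa.
split.
  move=> hc; case: (eqVneq P 0) => [P0|hP0].
    exists 1%N, (fun _ => 1), (fun _ => 1%:M); split.
    - by move=> _; apply: ler01.
    - by rewrite big_ord1.
    - by move=> _; apply: unitaryP; rewrite ad1 mul1mx.
    - move=> rho; rewrite /in_LC P0 mulmx0 => ->.
      rewrite /kraus_apply /mixed_unitary_apply.
      rewrite big1 ?big1 // => i _; by rewrite ?mulmx0 ?mul0mx ?scaler0.
    - by move=> i j; rewrite (ord1 i) (ord1 j) eqxx.
  have [alpha [ha hkl]] := kl_cond hPa hPP hc.
  exact (fwd2 hE hPa hPP hP0 ha hkl).
move=> [k [p [U [h0 h1 h2 h3 h4]]]].
exact (rev_dir hP h1 h2 h3 h4).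
Qed.
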